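(* Let $m$ be a positive integer and let $D$ be a quaternary near-extremal Hermitian self-dual code of length $6m$. Let $A_{2m}$ denote the number of codewords of weight $2m$ in $D$. Then $A_{2m}\equiv 0 \pmod 9$.
   Context: Let $\mathbb{F}_4=\{0,1,\omega,\omega^2\}$ with $\omega^2=\omega+1$. A quaternary code of length $n$ is a linear subspace of $\mathbb{F}_4^n$; with $\langle x,y\rangle_H=\sum_{k} x_k y_k^2$, the Hermitian dual is $D^{\perp_H}=\{x : \langle x,y\rangle_H=0\ \forall y\in D\}$ and $D$ is Hermitian self-dual if $D=D^{\perp_H}$. The weight of a vector is the number of its nonzero coordinates. A quaternary Hermitian self-dual code of length $n$ is near-extremal if its minimum (nonzero) weight equals $2\lfloor n/6\rfloor$; for length $6m$ this is $2m$. *)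

(* Defs.v *)
From HB Require Import structures.
From mathcomp Require Import all_boot all_order all_algebra all_field.
Set Implicit Arguments. Unset Strict Implicit. Unset Printing Implicit Defensive.
Import GRing.Theory.
Local Open Scope ring_scope.

(* F plays the role of F_4: an arbitrary finite field with 4 elements
   (unique up to isomorphism).  Vectors of length n are row vectors 'rV[F]_n. *)

Definition wt (F : finFieldType) (n : nat) (x : 'rV[F]_n) : nat :=
  #|[set i : 'I_n | x 0 i != 0]|.

Definition herm (F : finFieldType) (n : nat) (x y : 'rV[F]_n) : F :=
  \sum_(k < n) x 0 k * (y 0 k) ^+ 2.

Definition herm_self_dual (F : finFieldType) (n : nat) (D : {vspace 'rV[F]_n}) : Prop :=
  forall x : 'rV[F]_n, x \in D <-> (forall y : 'rV[F]_n, y \in D -> herm x y = 0).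

Definition min_weight_eq (F : finFieldType) (n : nat) (D : {vspace 'rV[F]_n}) (d : nat) : Prop :=
  (exists2 x : 'rV[F]_n, (x \in D) && (x != 0) & wt x = d) /\
  (forall x : 'rV[F]_n, x \in D -> x != 0 -> (d <= wt x)%N).

Definition near_extremal (F : finFieldType) (n : nat) (D : {vspace 'rV[F]_n}) : Prop :=
  min_weight_eq D (2 * (n %/ 6)).

Definition num_weight (F : finFieldType) (n : nat) (D : {vspace 'rV[F]_n}) (w : nat) : nat :=
  #|[set x : 'rV[F]_n | (x \in D) && (wt x == w)]|.

(* Main.v *)
Require Import Defs.
From HB Require Import structures.
From mathcomp Require Import all_boot all_order all_algebra all_field.
From mathcomp Require Import zify.
From Stdlib Require Import Lia.
Set Implicit Arguments. Unset Strict Implicit. Unset Printing Implicit Defensive.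
Import GRing.Theory Num.Theory.

Section Alg.
Local Open Scope ring_scope.

Definition Tp : {poly int} := 1 + 'X *+ 2.
Definition Ap : {poly int} := 'X^2.
Definition Bp : {poly int} := (1 + 'X) ^+ 2.

Lemma BpE : Bp = Ap + Tp.
Proof. by rewrite /Bp /Ap /Tp sqrrD expr1n mul1r addrC. Qed.

Fixpoint hom (N : nat) (p : {poly int}) : Prop :=
  match N with
  | 0 => exists c : int, p = c%:P
  | N'.+1 => exists (c : int) (q : {poly int}), hom N' q /\ p = c *: Tp ^+ N'.+1 + Ap * q
  end.

Lemma hom0 N : hom N 0.
Proof. elim: N => [|N IH] /=; first by exists 0; rewrite polyC0.
by exists 0, 0; rewrite scale0r mulr0 addr0. Qed.

Lemma homD N p q : hom N p -> hom N q -> hom N (p + q).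
Proof.
elim: N p q => [|N IH] p q /=.
  by move=> [c ->] [d ->]; exists (c + d); rewrite polyCD.
move=> [c [p' [hp ->]]] [d [q' [hq ->]]]; exists (c + d), (p' + q'); split; first exact: IH.
by rewrite scalerDl mulrDr addrACA.
Qed.

Lemma homZ N a p : hom N p -> hom N (a *: p).
Proof.
elim: N p => [|N IH] p /=.
  by move=> [c ->]; exists (a * c); rewrite -mul_polyC polyCM.
move=> [c [p' [hp ->]]]; exists (a * c), (a *: p'); split; first exact: IH.
by rewrite scalerDr scalerA scalerAr.
Qed.

Lemma homT N p : hom N p -> hom N.+1 (Tp * p).
Proof.
elim: N p => [|N IH] p /=.
  by move=> [c ->]; exists c, 0; split; [exists 0; rewrite polyC0| rewrite mulr0 addr0 expr1 -mul_polyC mulrC].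
move=> [c [p' [hp ->]]]; exists c, (Tp * p'); split; first exact: IH.
by rewrite mulrDr -scalerAr -exprS mulrCA.
Qed.

Lemma homA N p : hom N p -> hom N.+1 (Ap * p).
Proof. move=> hp /=; exists 0, p; split => //; by rewrite scale0r add0r. Qed.

Lemma homB N p : hom N p -> hom N.+1 (Bp * p).
Proof. by move=> hp; rewrite BpE mulrDl; apply: homD; [apply: homA| apply: homT]. Qed.

Lemma homAB N j : (j <= N)%N -> hom N (Ap ^+ j * Bp ^+ (N - j)).
Proof.
elim: N j => [|N IH] j.
  by rewrite leqn0 => /eqP ->; exists 1; rewrite !expr0 mulr1.
rewrite leq_eqVlt => /orP [/eqP -> | ].
  rewrite subnn expr0 mulr1 exprS; apply: homA.
  have := IH N (leqnn N); by rewrite subnn expr0 mulr1.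
rewrite ltnS => hj; rewrite subSn // exprS mulrCA; apply: homB; exact: IH.
Qed.

Lemma hom_sum N (I : finType) (P : pred I) (F : I -> {poly int}) :
  (forall i, P i -> hom N (F i)) -> hom N (\sum_(i | P i) F i).
Proof.
move=> h; elim/big_rec: _ => [|i p Pi hp]; first exact: hom0.
by apply: homD => //; apply: h.
Qed.

Lemma TpE : Tp = (2%:R)%:P * 'X + 1%:P.
Proof. by rewrite /Tp addrC polyC_natr mulr_natl polyC1. Qed.

Lemma size_Tp : size Tp = 2%N.
Proof. by rewrite TpE size_MXaddC size_polyC polyC_eq0 oner_eq0 andbF. Qed.

Lemma Tp_neq0 : Tp != 0.
Proof. by rewrite -size_poly_eq0 size_Tp. Qed.

Lemma size_TpX N : size (Tp ^+ N) = N.+1.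
Proof.
have h := size_exp Tp N; rewrite size_Tp mul1n in h.
have : Tp ^+ N != 0 by rewrite expf_neq0 // Tp_neq0.
by rewrite -size_poly_eq0; move: h; case: (size _) => //= k ->.
Qed.

Lemma coef0_TpX N : (Tp ^+ N)`_0 = 1.
Proof.
elim: N => [|N IH]; first by rewrite expr0 coefC.
by rewrite exprS coef0M IH mulr1 TpE coefD coefMX !coefC /= add0r. Qed.

Lemma lead_TpX N : lead_coef (Tp ^+ N) = 2 ^+ N.
Proof.
rewrite lead_coef_exp; congr (_ ^+ _).
by rewrite lead_coefE size_Tp TpE coefD coefMX !coefC /= addr0.
Qed.

Lemma size_Ap_mul q : q != 0 -> size (Ap * q) = (size q).+2.
Proof.
move=> q0; rewrite size_mul //; last by rewrite -size_poly_eq0 /Ap size_polyXn.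
by rewrite /Ap size_polyXn.
Qed.

Lemma size_hom N p : hom N p -> (size p <= (N.*2).+1)%N.
Proof.
elim: N p => [|N IH] p /=.
  by move=> [c ->]; rewrite size_polyC; case: (c != 0).
move=> [c [q [hq ->]]].
apply: (leq_trans (size_add _ _)); rewrite geq_max; apply/andP; split.
  apply: (leq_trans (size_scale_leq _ _)); rewrite size_TpX doubleS ltnS.
  lia.
have [->|q0] := eqVneq q 0; first by rewrite mulr0 size_poly0.
by rewrite size_Ap_mul // doubleS !ltnS; exact: IH.
Qed.

Lemma hom_rigid N p : hom N p ->
  ((size p <= N)%N -> p = 0) /\ ((size p <= N.+1)%N -> p = p`_0 *: Tp ^+ N).
Proof.
elim: N p => [|N IH] p /=.
  move=> [c ->]; split; first by rewrite leqn0 size_poly_eq0 => /eqP.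
  by move=> _; rewrite expr0 coefC /= alg_polyC.
move=> [c [q [hq ->]]].
have part2 : (size (c *: Tp ^+ N.+1 + Ap * q)%R <= N.+2)%N ->
    c *: Tp ^+ N.+1 + Ap * q = (c *: Tp ^+ N.+1 + Ap * q)`_0 *: Tp ^+ N.+1.
  move=> hs.
  have q0 : q = 0.
    apply: (proj1 (IH q hq)).
    have [->|qn0] := eqVneq q 0; first by rewrite size_poly0.
    have : (size (Ap * q)%R <= N.+2)%N.
      have -> : Ap * q = (c *: Tp ^+ N.+1 + Ap * q) - c *: Tp ^+ N.+1 by rewrite addrC addKr.
      apply: (leq_trans (size_add _ _)); rewrite geq_max hs /= size_opp.
      by apply: (leq_trans (size_scale_leq _ _)); rewrite size_TpX.
    by rewrite size_Ap_mul.
  by rewrite q0 mulr0 addr0 coefZ coef0_TpX mulr1.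
split => // hs.
have hs2 : (size (c *: Tp ^+ N.+1 + Ap * q)%R <= N.+2)%N by apply: (leq_trans hs).
move: hs; rewrite (part2 hs2); set a := (_ `_0).
have [->|a0] := eqVneq a 0; first by rewrite scale0r.
by rewrite size_scale // size_TpX ltnn.
Qed.

Lemma coef_1X (q : {poly int}) k : ((1 + 'X) * q)`_k = q`_k + (if k == 0%N then 0 else q`_k.-1).
Proof. by rewrite mulrDl mul1r coefD coefXM. Qed.

Lemma size_1X : size (1 + 'X : {poly int}) = 2%N.
Proof. by rewrite addrC -polyC1 size_XaddC. Qed.

Lemma key_alg (m : nat) (Q : {poly int}) : (0 < m)%N -> hom (m.*2.-1) Q ->
  (forall r, (4 * m < r)%N -> ('X^(m.*2) * ((1 + 'X) * Q))`_r = 0) ->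
  ('X^(m.*2) * ((1 + 'X) * Q))`_(4 * m) * 4 ^+ (3 * m) =
     - (4 ^+ (4 * m)) * ('X^(m.*2) * ((1 + 'X) * Q))`_(m.*2) ->
  Q`_0 = 0.
Proof.
move=> m0 hQ hz heq.
set N := m.*2.-1 in hQ.
have N1 : m.*2 = N.+1 by rewrite /N prednK // double_gt0.
have sP : (size ((1 + 'X) * Q)%R <= (m.*2).+1)%N.
  apply/leq_sizeP => k hk.
  have h : (4 * m < k + m.*2)%N by lia.
  have := hz _ h; rewrite coefXnM addnK; case: ifP => //; lia.
have sQ : (size Q <= N.+1)%N.
  have [->|Q0] := eqVneq Q 0; first by rewrite size_poly0.
  move: sP; rewrite size_mul // ?size_1X //; last by rewrite -size_poly_eq0 size_1X.
  by rewrite N1.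
have QE := (proj2 (hom_rigid hQ)) sQ.
move: heq; rewrite !coefXnM ltnn subnn ltnNge.
have -> : (m.*2 <= 4 * m)%N by lia.
rewrite /= !coef_1X /=.
have -> : (4 * m - m.*2 = N.+1)%N by lia.
rewrite /= QE !coefZ coef0_TpX mulr1.
have -> : (Tp ^+ N)`_N.+1 = 0.
  by apply/eqP; rewrite -/(_ \in _) ; apply/eqP; apply: (leq_sizeP _ _ (leqnn _)); rewrite size_TpX.
have -> : (Tp ^+ N)`_N = 2 ^+ N.
  by rewrite -lead_TpX lead_coefE size_TpX.
rewrite mulr0 add0r addr0 mulNr => /eqP; rewrite -subr_eq0 opprK -mulrA [4 ^+ _ * Q`_0]mulrC -mulrDr mulf_eq0 => /orP [/eqP //|].
move=> h; exfalso; move: h; apply/negP; apply: lt0r_neq0.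
by rewrite addr_gt0 ?mulr_gt0 ?exprn_gt0.
Qed.
End Alg.

Section Lin.
Local Open Scope ring_scope.
Variable F : finFieldType.

Lemma card_rs r n (A : 'M[F]_(r, n)) :
  #|[set x : 'rV[F]_n | (x <= A)%MS]| = (#|F| ^ \rank A)%N.
Proof.
have -> : [set x : 'rV[F]_n | (x <= A)%MS] =
    (fun u : 'rV[F]_(\rank A) => u *m row_base A) @: setT.
  apply/setP => x; rewrite inE; apply/idP/imsetP.
    by rewrite -(eq_row_base A) => /submxP [u ->]; exists u; rewrite ?inE.
  by move=> [u _ ->]; rewrite -(eq_row_base A) submxMl.
rewrite card_imset; last exact: row_free_inj (row_base_free A).
by rewrite cardsT card_mx mul1n.
Qed.

Lemma card_ker n r (B : 'M[F]_(n, r)) :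
  #|[set y : 'rV[F]_n | y *m B == 0]| = (#|F| ^ (n - \rank B))%N.
Proof. rewrite -mxrank_ker -card_rs; apply: eq_card => y; by rewrite !inE sub_kermx. Qed.

Lemma card_supp n (S : {set 'I_n}) :
  #|[set x : 'rV[F]_n | [set k | x 0 k != 0] \subset S]| = (#|F| ^ #|S|)%N.
Proof.
pose T := {k : 'I_n | k \in S}.
pose mk (g : {ffun T -> F}) : 'rV[F]_n :=
  \row_k (if (insub k : option T) is Some k' then g k' else 0).
have mk_inj : injective mk.
  move=> g1 g2 e; apply/ffunP => k'.
  have := congr1 (fun x : 'rV[F]_n => x 0 (val k')) e; rewrite !mxE.
  by rewrite valK.
have -> : [set x : 'rV[F]_n | [set k | x 0 k != 0] \subset S] = mk @: setT.
  apply/setP => x; rewrite inE; apply/idP/imsetP.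
    move=> /subsetP hS; exists [ffun k' => x 0 (val k')]; first by rewrite inE.
    apply/rowP => k; rewrite mxE; case: insubP => [k' _ vk|kS].
      by rewrite ffunE vk.
    by apply/eqP; apply: contraR kS => nz; apply: hS; rewrite inE.
  move=> [g _ ->]; apply/subsetP => k; rewrite inE mxE.
  by case: insubP => [k' kS _ _ //|]; rewrite eqxx.
rewrite card_imset // cardsT card_ffun; congr (_ ^ _)%N.
by rewrite card_sig; apply: eq_card => k.
Qed.

End Lin.

Section Code.
Local Open Scope ring_scope.
Variable F : finFieldType.
Hypothesis F4 : #|F| = 4%N.
Variable m : nat.
Variable D : {vspace 'rV[F]_(6 * m)}.
Hypothesis sd : herm_self_dual D.
Local Notation n := (6 * m)%N.

Lemma ch2 : (2 \in [pchar F])%N.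
Proof. by apply: (@card_finPcharP F 2 2). Qed.

Local Notation fr := (Frobenius_aut ch2).

Lemma frE (a : F) : fr a = a ^+ 2.
Proof. exact: pFrobenius_autE. Qed.

Lemma a4 (a : F) : a ^+ 4 = a.
Proof. by have := expf_card a; rewrite F4. Qed.

Lemma frK (a : F) : fr (fr a) = a.
Proof. by rewrite !frE -exprM a4. Qed.

Definition cj (x : 'rV[F]_n) : 'rV[F]_n := map_mx fr x.

Lemma cjK : involutive cj.
Proof. by move=> x; apply/rowP => k; rewrite !mxE frK. Qed.

Lemma supp_cj x : [set k | cj x 0 k != 0] = [set k | x 0 k != 0].
Proof. by apply/setP => k; rewrite !inE mxE frE expf_eq0. Qed.

Definition G : 'M[F]_(#|D|, n) :=
  \matrix_(i < #|D|, k < n) fr ((enum_val i : 'rV[F]_n) 0 k).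

Lemma rowG i : row i G = cj (enum_val i).
Proof. by apply/rowP => k; rewrite !mxE. Qed.

Lemma GE y i : (y *m G^T) 0 i = herm y (enum_val i).
Proof. by rewrite /herm mxE; apply: eq_bigr => k _; rewrite !mxE frE. Qed.

Lemma memD y : (y \in D) = (y *m G^T == 0).
Proof.
apply/idP/idP.
  move=> yD; apply/eqP/rowP => i; rewrite GE mxE.
  by apply: (proj1 (sd y)) => //; apply: enum_valP.
move=> /eqP h; apply/(proj2 (sd y)) => u uD.
by rewrite -(enum_rankK_in (mem0v D) uD) -GE h mxE.
Qed.

Lemma subG x : (x <= G)%MS = (cj x \in D).
Proof.
apply/idP/idP.
  move=> /submxP [u ->]; rewrite /cj map_mxM mulmx_sum_row.
  apply: memv_suml => i _; apply: memvZ.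
  have -> : row i (map_mx fr G) = enum_val i.
    by apply/rowP => k; rewrite !mxE frK.
  exact: enum_valP.
move=> cD; have e := enum_rankK_in (mem0v D) cD.
by rewrite -[x]cjK -e -rowG row_sub.
Qed.

Lemma F1 : (1 < #|F|)%N.
Proof. by rewrite F4. Qed.

Lemma card_cjpre (A : {set 'rV[F]_n}) : #|cj @^-1: A| = #|A|.
Proof. apply: card_preimset; exact: (can_inj cjK). Qed.

Lemma card_D_rank : #|D| = (#|F| ^ \rank G)%N.
Proof.
transitivity #|[set x | x \in D]|; first by apply: eq_card => y; rewrite inE.
rewrite -card_cjpre -card_rs; apply: eq_card => y; by rewrite !inE subG.
Qed.

Lemma rankG : \rank G = (3 * m)%N.
Proof.
have c1 : #|D| = (#|F| ^ (n - \rank G))%N.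
  rewrite -mxrank_tr -card_ker; apply: eq_card => y; by rewrite inE memD.
have e : (#|F| ^ \rank G)%N = (#|F| ^ (n - \rank G))%N by rewrite -card_D_rank -c1.
have := rank_leq_col G; move/(expnI F1): e; lia.
Qed.

Lemma card_D : #|D| = (4 ^ (3 * m))%N.
Proof. by rewrite card_D_rank rankG F4. Qed.

Definition DS (S : {set 'I_n}) :=
  [set x : 'rV[F]_n | (x \in D) && ([set k | x 0 k != 0] \subset S)].

Lemma duality S : (#|DS S| * 4 ^ (3 * m))%N = (4 ^ #|S| * #|DS (~: S)|)%N.
Proof.
pose E := diag_mx (\row_k ((k \in S)%:R : F)).
have subE (x : 'rV[F]_n) : (x <= E)%MS = ([set k | x 0 k != 0] \subset S).
  apply/idP/idP.
    move=> /submxP [u ->]; apply/subsetP => k; rewrite inE mul_mx_diag !mxE.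
    by case: (k \in S) => //; rewrite mulr0 eqxx.
  move=> /subsetP hS; apply/submxP; exists x; apply/rowP => k.
  rewrite mul_mx_diag !mxE; case: (boolP (k \in S)) => kS; first by rewrite mulr1.
  rewrite mulr0; apply/eqP; apply: contraR kS => nz; apply: hS; by rewrite inE.
have rankE : \rank E = #|S|.
  apply: (expnI F1); rewrite -card_rs -card_supp; apply: eq_card => x.
  by rewrite !inE subE.
have kerE (y : 'rV[F]_n) : (y *m E^T == 0) = ([set k | y 0 k != 0] \subset ~: S).
  rewrite tr_diag_mx mul_mx_diag; apply/eqP/subsetP => [h k|h].
    rewrite !inE => nz; apply/negP => kS; move: (congr1 (fun M : 'rV[F]_n => M 0 k) h).
    by rewrite !mxE kS mulr1 => /eqP; rewrite (negbTE nz).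
  apply/rowP => k; rewrite !mxE; case: (boolP (k \in S)) => kS; last by rewrite mulr0.
  case: (eqVneq (y 0 k) 0) => [->|nz]; first by rewrite mul0r.
  by have := h k; rewrite !inE nz kS => /(_ isT).
have c1 : #|DS (~: S)| = (#|F| ^ (n - \rank (col_mx G E)))%N.
  rewrite -mxrank_tr -card_ker; apply: eq_card => y.
  by rewrite !inE memD tr_col_mx mul_mx_row row_mx_eq0 kerE.
have c2 : #|DS S| = (#|F| ^ \rank (G :&: E))%N.
  rewrite -card_rs -card_cjpre; apply: eq_card => x.
  by rewrite !inE sub_capmx subG subE supp_cj.
have c3 : (\rank (col_mx G E) + \rank (G :&: E))%N = (3 * m + #|S|)%N.
  by have := mxrank_sum_cap G E; rewrite addsmxE rankE rankG.
have c4 := rank_leq_col (col_mx G E).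
rewrite c1 c2 F4 -!expnD; congr (_ ^ _)%N; lia.
Qed.

End Code.

Lemma count_super (T : finType) (U B : {set T}) s : B \subset U ->
  #|[set S : {set T} | [&& S \subset U, #|S| == s & B \subset S]]| =
  if (#|B| <= s)%N then 'C(#|U| - #|B|, s - #|B|) else 0%N.
Proof.
move=> BU; case: ifP => hB; last first.
  apply: eq_card0 => S; rewrite !inE; apply/negP => /and3P [_ /eqP hS BS].
  by move: (subset_leq_card BS); rewrite hS hB.
have cUB : #|U :\: B| = (#|U| - #|B|)%N by rewrite cardsD (setIidPr BU).
rewrite -cUB -cards_draws.
have -> : [set S : {set T} | [&& S \subset U, #|S| == s & B \subset S]] =
    (fun S' => S' :|: B) @: [set S' : {set T} | S' \subset U :\: B & #|S'| == (s - #|B|)%N].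
  apply/setP => S; rewrite inE; apply/idP/imsetP.
    move=> /and3P [SU /eqP hS BS]; exists (S :\: B).
      rewrite inE; apply/andP; split; first by apply: setSD.
      by rewrite cardsD (setIidPr BS) hS.
    apply/setP => k; rewrite !inE; case: (boolP (k \in B)) => kB; last by rewrite orbF.
    by rewrite orbT (subsetP BS k kB).
  move=> [S' /[!inE] /andP [S'U /eqP hS'] ->]; apply/and3P; split.
  - by rewrite subUset BU andbT; apply: (subset_trans S'U); apply: subsetDl.
  - have dis : [disjoint S' & B].
      by rewrite -setI_eq0; apply/eqP/setP => k; rewrite !inE; apply/andP => [[kS kB]];
         move: (subsetP S'U k kS); rewrite inE kB.
    by rewrite cardsU (disjoint_setI0 dis) cards0 subn0 hS' subnK.
  - exact: subsetUr.
rewrite card_in_imset // => S1 S2 /[!inE] /andP [h1 _] /andP [h2 _] e.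
apply/setP => k; have := congr1 (fun X : {set T} => k \in X) e; rewrite /= !inE.
case: (boolP (k \in B)) => kB; last by rewrite !orbF.
have n1 : k \notin S1 by apply/negP => /(subsetP h1); rewrite inE kB.
have n2 : k \notin S2 by apply/negP => /(subsetP h2); rewrite inE kB.
by rewrite (negbTE n1) (negbTE n2).
Qed.

Section Poly2.
Local Open Scope ring_scope.
Lemma coef_1Xn b k : ((1 + 'X : {poly int}) ^+ b)`_k = ('C(b, k))%:R.
Proof.
elim: b k => [|b IH] k; first by rewrite expr0 coefC; case: k.
rewrite exprS coef_1X !IH; case: k => [|k] //=; first by rewrite addr0 !bin0.
by rewrite binS natrD addrC.
Qed.

Lemma coef_term w b r : ('X^w * (1 + 'X) ^+ b : {poly int})`_r =
  if (r < w)%N then 0 else ('C(b, r - w))%:R.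
Proof. by rewrite coefXnM coef_1Xn. Qed.
End Poly2.

Section Code2.
Local Open Scope ring_scope.
Variable F : finFieldType.
Hypothesis F4 : #|F| = 4%N.
Variable m : nat.
Variable D : {vspace 'rV[F]_(6 * m)}.
Hypothesis sd : herm_self_dual D.
Local Notation n := (6 * m)%N.

Definition supp (x : 'rV[F]_n) := [set k | x 0 k != 0].

Lemma cube_nz (a : F) : a != 0 -> a ^+ 3 = 1.
Proof.
move=> a0; apply: (mulfI a0); rewrite mulr1 -exprS; exact: a4.
Qed.

Lemma herm_xx (x : 'rV[F]_n) : herm x x = (wt x)%:R.
Proof.
rewrite /herm /wt -sum1_card natr_sum.
rewrite [RHS](eq_bigl (fun k => x 0 k != 0)); last by move=> k; rewrite inE.
rewrite [LHS](bigID (fun k => x 0 k != 0)) /= [X in _ + X = _]big1 ?addr0; last first.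
  by move=> k /negPn /eqP ->; rewrite mul0r.
by apply: eq_bigr => k nz; rewrite -exprS cube_nz.
Qed.

Lemma even_wt (x : 'rV[F]_n) : x \in D -> ~~ odd (wt x).
Proof.
move=> xD; have h : herm x x = 0 by apply: (proj1 (sd x)).
by rewrite -dvdn2 (dvdn_pcharf (ch2 F4)) -herm_xx h.
Qed.


Lemma setC_ab (a b : 'I_n) (S : {set 'I_n}) : a != b -> S \subset ~: [set a; b] ->
  ~: (a |: S) = b |: (~: [set a; b] :\: S).
Proof.
move=> ab SU; have bS : b \notin S by apply/negP => /(subsetP SU); rewrite !inE eqxx orbT.
apply/setP => k; rewrite !inE.
case: (eqVneq k b) => [->|kb]; first by rewrite eq_sym (negbTE ab) (negbTE bS).
by rewrite /= orbF negb_or andbC.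
Qed.

Lemma notin_ab (a b : 'I_n) (S : {set 'I_n}) : S \subset ~: [set a; b] -> a \notin S.
Proof. by move=> SU; apply/negP => /(subsetP SU); rewrite !inE eqxx. Qed.

Lemma card_U (a b : 'I_n) : a != b -> #|~: [set a; b]| = (n - 2)%N.
Proof. by move=> ab; have := cardsC [set a; b]; rewrite cards2 ab card_ord; lia. Qed.

Variables i j : 'I_n.
Hypothesis hij : i != j.
Local Notation U := (~: [set i; j]).

Lemma setUji : [set j; i] = [set i; j].
Proof. by rewrite setUC. Qed.

Definition Phi (S : {set 'I_n}) : int := (#|DS D (i |: S)|)%:R - (#|DS D (j |: S)|)%:R.

Lemma Phi_dual (S : {set 'I_n}) : S \subset U -> Phi S * 4 ^+ (3 * m) = - 4 ^+ #|S|.+1 * Phi (U :\: S).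
Proof.
move=> SU.
have SU' : S \subset ~: [set j; i] by rewrite setUji.
have hji : j != i by rewrite eq_sym.
have di := duality F4 sd (i |: S); have dj := duality F4 sd (j |: S).
rewrite (setC_ab hij SU) cardsU1 (notin_ab SU) in di.
rewrite (setC_ab (hji) SU') cardsU1 (notin_ab SU') setUji in dj.
move: (congr1 (fun k => k%:R : int) di) (congr1 (fun k => k%:R : int) dj).
rewrite /Phi !natrM !natrX /= add1n mulrBl => -> ->.
by rewrite mulrBr !mulNr opprK addrC.
Qed.


Definition hs (s : nat) : int :=
  \sum_(S : {set 'I_n} | (S \subset U) && (#|S| == s)) Phi S.

Lemma h_dual s : (s <= n - 2)%N -> hs s * 4 ^+ (3 * m) = - 4 ^+ s.+1 * hs (n - 2 - s).
Proof.
move=> hs2; rewrite /hs mulr_suml.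
rewrite (eq_bigr (fun S => - 4 ^+ s.+1 * Phi (U :\: S))); last first.
  by move=> S /andP [SU /eqP <-]; apply: Phi_dual.
rewrite -mulr_sumr; congr (_ * _).
rewrite [RHS](reindex_onto (fun S => U :\: S) (fun S => U :\: S)) /=; last first.
  by move=> S /andP [SU _]; rewrite setDDr setDv set0U; apply/setIidPr.
apply: eq_bigl => S; rewrite setDDr setDv set0U subsetDl /=.
have cU := card_U hij.
apply/idP/idP.
  move=> /andP [SU /eqP hS]; apply/andP; split.
    by rewrite cardsD (setIidPr SU) hS cU.
  by apply/eqP/setIidPr.
move=> /andP [/eqP hS /eqP /setIidPr SU]; rewrite SU /=.
move: hS; rewrite cardsD (setIidPr SU) cU.
have := subset_leq_card SU; rewrite cU.
move=> h1 h2; apply/eqP; by rewrite -(subKn h1) h2 subKn.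
Qed.


Definition eps (x : 'rV[F]_n) : int :=
  ((i \in supp x) : nat)%:R - ((j \in supp x) : nat)%:R.

Definition Hp : {poly int} :=
  \sum_(x | x \in D) eps x *: ('X^(wt x) * (1 + 'X) ^+ (n.-1 - wt x)).

Lemma sum_bool (T : finType) (P Q : pred T) :
  (\sum_(t | P t) (Q t : nat))%N = #|[set t | P t && Q t]|.
Proof.
rewrite -sum1_card [RHS](eq_bigl (fun t => P t && Q t)); last by move=> t; rewrite inE.
by rewrite big_mkcondr /=; apply: eq_bigr => t _; case: (Q t).
Qed.

Lemma cardDS T : (#|DS D T|)%:R = \sum_(x | x \in D) ((supp x \subset T) : nat)%:R :> int.
Proof.
rewrite -natr_sum sum_bool; congr (_ %:R); apply: eq_card => x; by rewrite !inE.
Qed.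

Lemma cnt_eq (a b : 'I_n) s x : a != b ->
  #|[set S : {set 'I_n} | ((S \subset ~: [set a; b]) && (#|S| == s)) && (supp x \subset a |: S)]| =
  if b \in supp x then 0%N else
  if (#|supp x :\ a| <= s)%N then 'C(n - 2 - #|supp x :\ a|, s - #|supp x :\ a|) else 0%N.
Proof.
move=> ab; case: ifP => hb.
  apply: eq_card0 => S; rewrite !inE; apply/negP => /andP [/andP [SU _] sub].
  have := subsetP sub b hb; rewrite !inE => /orP [/eqP e|bS].
    by move: ab; rewrite e eqxx.
  by have := subsetP SU b bS; rewrite !inE eqxx orbT.
have sub : supp x :\ a \subset ~: [set a; b].
  apply/subsetP => k; rewrite !inE => /andP [ka ks]; rewrite (negbTE ka) /=.
  by apply/eqP => e; move: hb; rewrite -e inE ks.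
rewrite -(card_U ab) -(count_super s sub); apply: eq_card => S; rewrite !inE.
by rewrite -andbA subDset.
Qed.

Lemma cnt_eq' s x :
  #|[set S : {set 'I_n} | ((S \subset U) && (#|S| == s)) && (supp x \subset j |: S)]| =
  if i \in supp x then 0%N else
  if (#|supp x :\ j| <= s)%N then 'C(n - 2 - #|supp x :\ j|, s - #|supp x :\ j|) else 0%N.
Proof. by rewrite -setUji; apply: cnt_eq; rewrite eq_sym. Qed.

Lemma setD1_notin (A : {set 'I_n}) a : a \notin A -> A :\ a = A.
Proof.
move=> aA; apply/setP => k; rewrite !inE; case: (eqVneq k a) => // ->.
by rewrite (negbTE aA).
Qed.

Lemma term_eq x s :
  (#|[set S : {set 'I_n} | ((S \subset U) && (#|S| == s)) && (supp x \subset i |: S)]|)%:R -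
  (#|[set S : {set 'I_n} | ((S \subset U) && (#|S| == s)) && (supp x \subset j |: S)]|)%:R =
  eps x * ('X^(wt x) * (1 + 'X) ^+ (n.-1 - wt x))`_s.+1.
Proof.
rewrite cnt_eq // cnt_eq' coef_term /eps.
have wE : wt x = #|supp x| by [].
case: (boolP (i \in supp x)) => hi; case: (boolP (j \in supp x)) => hj /=.
- by rewrite subrr mul0r.
- rewrite subr0 mul1r wE (cardsD1 i) hi /= add1n ltnS subSS ltnNge.
  case: (_ <= s)%N => //=; congr (_ %:R); congr 'C(_, _); lia.
- rewrite sub0r mulN1r wE (cardsD1 j) hj /= add1n ltnS subSS ltnNge.
  case: (_ <= s)%N => //=; rewrite ?oppr0 //; congr (- _ %:R); congr 'C(_, _); lia.
- by rewrite !setD1_notin // subrr mul0r.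
Qed.

Lemma h_coef s : hs s = Hp`_s.+1.
Proof.
rewrite /hs /Phi coef_sum.
under eq_bigr do rewrite !cardDS -sumrB.
rewrite exchange_big /=; apply: eq_bigr => x xD.
rewrite coefZ sumrB -!natr_sum !sum_bool.
exact: term_eq.
Qed.


Hypothesis m0 : (0 < m)%N.
Hypothesis hmin : forall x : 'rV[F]_n, x \in D -> x != 0 -> (2 * m <= wt x)%N.

Definition jx (x : 'rV[F]_n) := ((wt x)./2 - m)%N.

Lemma eps_facts x : x \in D -> eps x != 0 ->
  wt x = (m.*2 + (jx x).*2)%N /\ (jx x <= m.*2.-1)%N.
Proof.
move=> xD e0.
have x0 : x != 0.
  apply: contraNneq e0 => ->; rewrite /eps /supp.
  have -> : [set k | (0 : 'rV[F]_n) 0 k != 0] = set0 by apply/setP => k; rewrite !inE mxE eqxx.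
  by rewrite !inE subrr.
have w2 := hmin xD x0.
have ev := even_wt xD.
have wn : (wt x < n)%N.
  have : (i \notin supp x) || (j \notin supp x).
    apply: contraNT e0; rewrite negb_or !negbK => /andP [hi hj].
    by rewrite /eps hi hj subrr.
  move=> h; rewrite /wt -[X in (_ < X)%N](card_ord n) -cardsT; apply: proper_card.
  rewrite properT; apply/eqP => e; move: h; rewrite /supp e !inE.
  by [].
have hw := halfK (wt x); rewrite (negbTE ev) subn0 in hw.
rewrite /jx; move: w2 wn hw; set h := (wt x)./2; set w := wt x.
rewrite -!muln2; lia.
Qed.

Definition Qp : {poly int} :=
  \sum_(x | x \in D) eps x *: (Ap ^+ jx x * Bp ^+ (m.*2.-1 - jx x)).

Lemma term_rep x : x \in D ->
  eps x *: ('X^(wt x) * (1 + 'X) ^+ (n.-1 - wt x)) =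
  'X^(m.*2) * ((1 + 'X) * (eps x *: (Ap ^+ jx x * Bp ^+ (m.*2.-1 - jx x)))).
Proof.
move=> xD; case: (eqVneq (eps x) 0) => [->|e0]; first by rewrite !scale0r !mulr0.
have [hw hj] := eps_facts xD e0.
rewrite -!scalerAr; congr (_ *: _).
have e : (n.-1 - wt x)%N = ((m.*2.-1 - jx x) * 2).+1.
  rewrite hw; rewrite -!muln2; lia.
rewrite e exprS /Ap /Bp -!exprM hw exprD -!mulrA; congr (_ * _).
by rewrite mulrCA muln2 mul2n mul2n.
Qed.

Lemma Hp_rep : Hp = 'X^(m.*2) * ((1 + 'X) * Qp).
Proof.
rewrite /Hp (eq_bigr _ (fun x xD => term_rep xD)).
by rewrite /Qp -!mulr_sumr.
Qed.

Lemma hom_Qp : hom (m.*2.-1) Qp.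
Proof.
apply: hom_sum => x xD; case: (eqVneq (eps x) 0) => [->|e0].
  by rewrite scale0r; apply: hom0.
apply: homZ; apply: homAB; exact: (proj2 (eps_facts xD e0)).
Qed.

Lemma Hp_size : (size Hp <= n)%N.
Proof.
rewrite Hp_rep; apply: (leq_trans (size_mul_leq _ _)); rewrite size_polyXn.
have h1 := size_mul_leq (1 + 'X) Qp; rewrite size_1X in h1.
have h2 := size_hom hom_Qp.
lia.
Qed.

Lemma Hp_dual s : (s <= n - 2)%N ->
  Hp`_s.+1 * 4 ^+ (3 * m) = - 4 ^+ s.+1 * Hp`_(n - 2 - s).+1.
Proof. by move=> hs2; rewrite -!h_coef h_dual. Qed.

Lemma Q0 : Qp`_0 = 0.
Proof.
apply: (key_alg m0 hom_Qp); rewrite -Hp_rep.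
  move=> r hr; case: (ltnP r n) => rn; last first.
    by apply/(leq_sizeP _ _ (leq_trans Hp_size rn)).
  have hs2 : (r.-1 <= n - 2)%N by lia.
  have := Hp_dual hs2; rewrite prednK; last by lia.
  have -> : Hp`_(n - 2 - r.-1).+1 = 0.
    by rewrite Hp_rep coefXnM; case: ifP => //; lia.
  rewrite mulr0 => /eqP; rewrite mulf_eq0 expf_eq0 /= => /orP [/eqP //|].
  by rewrite andbF.
have hs2 : ((4 * m).-1 <= n - 2)%N by lia.
have := Hp_dual hs2; rewrite prednK; last by lia.
by have -> : ((n - 2 - (4 * m).-1).+1 = m.*2)%N by lia.
Qed.


Lemma Hp2m : Hp`_(m.*2) =
  (#|[set x | ((x \in D) && (wt x == 2 * m)%N) && (x 0 i != 0)]|)%:R -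
  (#|[set x | ((x \in D) && (wt x == 2 * m)%N) && (x 0 j != 0)]|)%:R.
Proof.
rewrite /Hp coef_sum.
rewrite (eq_bigr (fun x => eps x * ((wt x == 2 * m)%N : nat)%:R)); last first.
  move=> x xD; rewrite coefZ coef_term.
  case: (eqVneq (eps x) 0) => [->|e0]; first by rewrite !mul0r.
  have [hw _] := eps_facts xD e0; rewrite hw -!muln2.
  case: (eqVneq (jx x) 0) => [->|jn0]; first by rewrite mul0n addn0 ltnn subnn bin0 [(2 * m)%N]mulnC eqxx.
  have -> : (m * 2 < m * 2 + jx x * 2)%N by lia.
  have -> : (m * 2 + jx x * 2 == 2 * m)%N = false by apply/eqP; lia.
  by rewrite mulr0.
rewrite /eps; under eq_bigr do rewrite mulrBl -!natrM.
rewrite sumrB -!natr_sum.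
have sb (k : 'I_n) : (\sum_(x in D) ((k \in supp x) * (wt x == 2 * m)))%N =
    #|[set x | ((x \in D) && (wt x == 2 * m)%N) && (x 0 k != 0)]|.
  rewrite (eq_bigr (fun x => ((k \in supp x) && (wt x == 2 * m)%N : nat))); last first.
    by move=> x _; rewrite mulnb.
  rewrite sum_bool; apply: eq_card => x; rewrite !inE.
  by case: (x \in D); case: (wt x == 2 * m)%N; case: (_ != 0).
by rewrite !sb.
Qed.

Lemma a_eq :
  #|[set x | ((x \in D) && (wt x == 2 * m)%N) && (x 0 i != 0)]| =
  #|[set x | ((x \in D) && (wt x == 2 * m)%N) && (x 0 j != 0)]|.
Proof.
have : Hp`_(m.*2) = 0.
  by rewrite Hp_rep coefXnM ltnn subnn coef_1X /= addr0 Q0.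
by rewrite Hp2m => /eqP; rewrite subr_eq0 eqr_nat => /eqP.
Qed.

End Code2.

Section Scal.
Local Open Scope ring_scope.
Variable F : finFieldType.
Variable n : nat.
Variable D : {vspace 'rV[F]_n}.
Variable w : nat.
Variable k : 'I_n.

Lemma wtZ (c : F) (x : 'rV[F]_n) : c != 0 -> wt (c *: x) = wt x.
Proof.
move=> c0; rewrite /wt; apply: eq_card => l; rewrite !inE mxE.
by rewrite mulf_eq0 negb_or c0.
Qed.

Lemma class_card (c : F) : c != 0 ->
  #|[set x : 'rV[F]_n | ((x \in D) && (wt x == w)) && (x 0 k == c)]| =
  #|[set x : 'rV[F]_n | ((x \in D) && (wt x == w)) && (x 0 k == 1)]|.
Proof.
move=> c0.
have -> : [set x : 'rV[F]_n | ((x \in D) && (wt x == w)) && (x 0 k == c)] =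
    (fun x => c *: x) @: [set x : 'rV[F]_n | ((x \in D) && (wt x == w)) && (x 0 k == 1)].
  apply/setP => y; rewrite inE; apply/idP/imsetP.
    move=> /andP [/andP [yD yw] /eqP yk]; exists (c^-1 *: y).
      rewrite !inE memvZ // wtZ ?invr_eq0 // yw mxE yk mulVf //.
      by rewrite !eqxx.
    by rewrite scalerA divff // scale1r.
  move=> [x /[!inE] /andP [/andP [xD /eqP xw] /eqP xk] ->].
  by rewrite memvZ // wtZ // xw eqxx mxE xk mulr1 eqxx.
apply: card_imset; exact: scalerI.
Qed.

Lemma split_nz (v : F) : (\sum_(c : F | c != 0%R) (v == c : nat))%N = (v != 0%R : nat).
Proof.
case: (eqVneq v 0) => [->|v0].
  by rewrite big1 // => c c0; rewrite eq_sym (negbTE c0).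
rewrite (bigD1 v) //= eqxx big1 ?addn0 // => c /andP [_ cv].
by rewrite eq_sym (negbTE cv).
Qed.

End Scal.

Theorem lemma3p4 (F : finFieldType) (m : nat) (D : {vspace 'rV[F]_(6 * m)}) :
  #|F| = 4 -> (0 < m)%N -> herm_self_dual D -> near_extremal D ->
  num_weight D (2 * m) = 0 %[mod 9].
Proof.
move=> F4 m0 sd ne.
have hmin : forall x : 'rV[F]_(6 * m), x \in D -> x != 0%R -> (2 * m <= wt x)%N.
  move=> x xD x0; have := proj2 ne x xD x0.
  by rewrite mulKn.
pose P (x : 'rV[F]_(6 * m)) := (x \in D) && (wt x == 2 * m).
pose a (k : 'I_(6 * m)) := #|[set x | P x && (x 0%R k != 0%R)]|.
have lt0 : (0 < 6 * m)%N by lia.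
pose i0 : 'I_(6 * m) := Ordinal lt0.
have aeq : forall k, a k = a i0.
  move=> k; case: (eqVneq k i0) => [->|hk] //; exact: (a_eq F4 sd hk m0 hmin).
have sum_a : (\sum_k a k = 2 * m * num_weight D (2 * m))%N.
  rewrite /a; under eq_bigr do rewrite -sum_bool.
  rewrite exchange_big /=.
  rewrite (eq_bigr (fun _ => 2 * m)%N); last first.
    move=> x /andP [_ /eqP <-]; rewrite sum_bool /wt; apply: eq_card => k; by rewrite !inE.
  rewrite sum_nat_const mulnC; congr (_ * _)%N; apply: eq_card => x; by rewrite !inE.
move: sum_a; rewrite (eq_bigr (fun _ => a i0)) // sum_nat_const card_ord => e.
have A3 : num_weight D (2 * m) = (3 * a i0)%N by nia.
pose b := #|[set x : 'rV[F]_(6 * m) | ((x \in D) && (wt x == 2 * m)) && (x 0%R i0 == 1%R)]|.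
have a3 : a i0 = (3 * b)%N.
  rewrite /a -sum_bool.
  rewrite (eq_bigr (fun x : 'rV[F]_(6 * m) => \sum_(c : F | c != 0%R) (x 0%R i0 == c : nat))%N); last first.
    by move=> x _; rewrite split_nz.
  rewrite exchange_big /=.
  rewrite (eq_bigr (fun _ => b)); last first.
    move=> c c0; rewrite sum_bool /b -(class_card D (2 * m) i0 c0); apply: eq_card => x.
    by rewrite !inE.
  rewrite sum_nat_const; congr (_ * _)%N.
  by rewrite cardC1 F4.
rewrite A3 a3 mulnA (_ : 3 * 3 = 9) //; by rewrite ?modnMl ?modnMr ?mod0n.
Qed.
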